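(* Let $f(z)=z+\sum_{k=2}^{\infty}a_kz^k$ be analytic in $\mathbb{D}=\{z:|z|<1\}$ with $zf'(z)-f(z)=\frac12 z^2\phi(z)$ for all $z\in\mathbb{D}$, where $\phi$ is analytic in $\mathbb{D}$ and $|\phi(z)|\le1$, and let $s_n(z;f)=z+\sum_{k=2}^n a_kz^k$. Then for each $n\ge2$, \[\left|\frac{s_n'(z;f)}{f'(z)}-1\right|\le |z|^n\left(\frac{n+1}{2n}+A_n\frac{|z|}{1-|z|}\right),\qquad |z|=r<1,\] where $A_n=\dfrac{\sqrt{2r-r^2}}{2(1-r)}\bigl(n+1+\ln(n-1)+\gamma\bigr)$ and $\gamma\approx0.57722$ is the Euler–Mascheroni constant. *)

(* Defs.v *)
From Stdlib Require Import Reals.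
From Coquelicot Require Import Coquelicot.
Open Scope C_scope.

(* Partial sum s_n(z;f) = sum_{k=0}^n a_k z^k (with a_0 = 0, a_1 = 1 this is
   z + sum_{k=2}^n a_k z^k). *)
Definition partial_sum (a : nat -> C) (n : nat) (z : C) : C :=
  sum_n (fun k => a k * z ^ k) n.

Definition partial_sum_deriv (a : nat -> C) (n : nat) (z : C) : C :=
  sum_n (fun j => RtoC (INR (S j)) * a (S j) * z ^ j) (Nat.pred n).

Definition euler_gamma : R :=
  real (Lim_seq (fun m => (sum_n (fun k => / INR (S k)) (Nat.pred m) - ln (INR m))%R)).

Definition A_coef (n : nat) (r : R) : R :=
  (sqrt (2 * r - r ^ 2) / (2 * (1 - r)) * (INR n + 1 + ln (INR n - 1) + euler_gamma))%R.

(* Main.v *)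
Require Import Defs.
From Stdlib Require Import Reals Lra Lia Psatz.
From Coquelicot Require Import Coquelicot.
Open Scope C_scope.

Open Scope C_scope.

Fixpoint csum (n : nat) (f : nat -> C) : C :=
  match n with O => 0 | S m => csum m f + f m end.
Fixpoint rsum (n : nat) (f : nat -> R) : R :=
  match n with O => 0%R | S m => (rsum m f + f m)%R end.

Definition Cser (u : nat -> C) (l : C) : Prop :=
  forall eps : R, (0 < eps)%R -> exists N0, forall N, (N0 <= N)%nat -> (Cmod (csum N u - l) < eps)%R.

Lemma sum_n_csum (u : nat -> C) N : sum_n u N = csum (S N) u.
Proof.
  induction N.
  - rewrite sum_O. simpl. change (u 0%nat = 0 + u 0%nat). ring.
  - rewrite sum_Sn, IHN. reflexivity.
Qed.

Lemma is_series_Cser (u : nat -> C) (l : C) :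
  @is_series C_AbsRing C_NormedModule u l -> Cser u l.
Proof.
  intros H eps Heps.
  destruct (proj1 (filterlim_locally_ball_norm (sum_n u) l) H (mkposreal eps Heps)) as [N0 HN].
  exists (S N0). intros N HN'. destruct N as [|N]; [lia|].
  specialize (HN N ltac:(lia)). unfold ball_norm in HN.
  rewrite sum_n_csum in HN. exact HN.
Qed.

Lemma Cser_is_series (u : nat -> C) (l : C) :
  Cser u l -> @is_series C_AbsRing C_NormedModule u l.
Proof.
  intros H. apply (proj2 (filterlim_locally_ball_norm (sum_n u) l)).
  intros eps. destruct (H eps (cond_pos eps)) as [N0 HN].
  exists N0. intros N HN'. unfold ball_norm.
  rewrite sum_n_csum. apply HN. lia.
Qed.

Lemma csum_plus n f g : csum n (fun k => f k + g k) = csum n f + csum n g.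
Proof. induction n; simpl. ring. rewrite IHn. ring. Qed.
Lemma csum_scal n c f : csum n (fun k => c * f k) = c * csum n f.
Proof. induction n; simpl. ring. rewrite IHn. ring. Qed.
Lemma csum_ext n f g : (forall k, (k < n)%nat -> f k = g k) -> csum n f = csum n g.
Proof. induction n; simpl; intros H. auto. rewrite IHn by (intros; apply H; lia). rewrite H by lia. auto. Qed.
Lemma rsum_ext n f g : (forall k, (k < n)%nat -> f k = g k) -> rsum n f = rsum n g.
Proof. induction n; simpl; intros H. auto. rewrite IHn by (intros; apply H; lia). rewrite H by lia. auto. Qed.
Lemma rsum_le n f g : (forall k, (k < n)%nat -> f k <= g k)%R -> (rsum n f <= rsum n g)%R.
Proof. induction n; simpl; intros H. lra. pose proof (IHn ltac:(intros; apply H; lia)). pose proof (H n ltac:(lia)). lra. Qed.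
Lemma rsum_nonneg n f : (forall k, (k < n)%nat -> 0 <= f k)%R -> (0 <= rsum n f)%R.
Proof. intros H. replace 0%R with (rsum n (fun _ => 0%R)). apply rsum_le; auto.
  induction n; simpl; auto. rewrite IHn. lra. intros; apply H; lia. Qed.
Lemma rsum_plus n f g : rsum n (fun k => f k + g k)%R = (rsum n f + rsum n g)%R.
Proof. induction n; simpl. lra. rewrite IHn. lra. Qed.
Lemma rsum_scal n c f : rsum n (fun k => c * f k)%R = (c * rsum n f)%R.
Proof. induction n; simpl. lra. rewrite IHn. lra. Qed.
Lemma Cmod_csum n f : (Cmod (csum n f) <= rsum n (fun k => Cmod (f k)))%R.
Proof. induction n; simpl. rewrite Cmod_0; lra.
  eapply Rle_trans. apply Cmod_triangle. lra. Qed.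
Lemma csum_split m k f : csum (m + k) f = csum m f + csum k (fun i => f (m + i)%nat).
Proof. induction k; simpl. rewrite Nat.add_0_r. ring. rewrite Nat.add_succ_r. simpl. rewrite IHk. ring. Qed.
Lemma rsum_split m k f : rsum (m + k) f = (rsum m f + rsum k (fun i => f (m + i)%nat))%R.
Proof. induction k; simpl. rewrite Nat.add_0_r. ring. rewrite Nat.add_succ_r. simpl. rewrite IHk. ring. Qed.
Lemma csum_shift n f : csum (S n) f = f 0%nat + csum n (fun k => f (S k)).
Proof. induction n; simpl in *. ring. rewrite IHn. ring. Qed.
Lemma rsum_shift n f : rsum (S n) f = (f 0%nat + rsum n (fun k => f (S k)))%R.
Proof. induction n; simpl in *. ring. rewrite IHn. ring. Qed.
Lemma RtoC_rsum n f : RtoC (rsum n f) = csum n (fun k => RtoC (f k)).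
Proof. induction n; simpl. auto. rewrite <- IHn. rewrite RtoC_plus. auto. Qed.

Open Scope C_scope.

Definition Rser (u : nat -> R) (l : R) : Prop :=
  forall eps : R, (0 < eps)%R -> exists N0, forall N, (N0 <= N)%nat -> (Rabs (rsum N u - l) < eps)%R.

Lemma sum_n_rsum (u : nat -> R) N : sum_n u N = rsum (S N) u.
Proof.
  induction N.
  - rewrite sum_O. simpl. change (u 0%nat = 0 + u 0%nat)%R. ring.
  - rewrite sum_Sn, IHN. reflexivity.
Qed.

Lemma Rser_is_series (u : nat -> R) (l : R) :
  Rser u l -> is_series u l.
Proof.
  intros H. apply (proj2 (filterlim_locally_ball_norm (sum_n u) l)).
  intros eps. destruct (H eps (cond_pos eps)) as [N0 HN].
  exists N0. intros N HN'. unfold ball_norm.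
  rewrite sum_n_rsum. apply HN. lia.
Qed.

Lemma is_series_Rser (u : nat -> R) (l : R) :
  is_series u l -> Rser u l.
Proof.
  intros H eps Heps.
  destruct (proj1 (filterlim_locally_ball_norm (sum_n u) l) H (mkposreal eps Heps)) as [N0 HN].
  exists (S N0). intros N HN'. destruct N as [|N]; [lia|].
  specialize (HN N ltac:(lia)). unfold ball_norm in HN.
  rewrite sum_n_rsum in HN. exact HN.
Qed.

Lemma Cser_bound2 u l c d K B :
  Cser u l -> (0 <= K)%R ->
  (exists N0, forall N, (N0 <= N)%nat -> (Cmod (csum N u - c) + K * Cmod (csum N u - d) <= B)%R) ->
  (Cmod (l - c) + K * Cmod (l - d) <= B)%R.
Proof.
  intros Hs HK [N0 HN].
  apply Rnot_lt_le. intros Hlt.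
  set (e := ((Cmod (l - c) + K * Cmod (l - d) - B) / (1 + K))%R).
  assert (He : (0 < e)%R). { unfold e. apply Rdiv_lt_0_compat; lra. }
  destruct (Hs e He) as [N1 HN1].
  specialize (HN (max N0 N1) ltac:(lia)). specialize (HN1 (max N0 N1) ltac:(lia)).
  set (s := csum (max N0 N1) u) in *.
  assert (H1 : (Cmod (l - c) <= Cmod (s - c) + Cmod (s - l))%R).
  { replace (l - c) with ((s - c) + - (s - l)) by ring.
    eapply Rle_trans. apply Cmod_triangle. rewrite Cmod_opp. lra. }
  assert (H2 : (Cmod (l - d) <= Cmod (s - d) + Cmod (s - l))%R).
  { replace (l - d) with ((s - d) + - (s - l)) by ring.
    eapply Rle_trans. apply Cmod_triangle. rewrite Cmod_opp. lra. }
  assert (e * (1 + K) = Cmod (l - c) + K * Cmod (l - d) - B)%R.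
  { unfold e. field. lra. }
  nra.
Qed.

Lemma Cser_bound u l c B :
  Cser u l ->
  (exists N0, forall N, (N0 <= N)%nat -> (Cmod (csum N u - c) <= B)%R) ->
  (Cmod (l - c) <= B)%R.
Proof.
  intros Hs [N0 HN].
  pose proof (Cser_bound2 u l c c 0 B Hs (Rle_refl 0)) as H.
  rewrite Rmult_0_l, Rplus_0_r in H. apply H.
  exists N0. intros N HN'. rewrite Rmult_0_l, Rplus_0_r. auto.
Qed.

Lemma Cser_unique u l1 l2 : Cser u l1 -> Cser u l2 -> l1 = l2.
Proof.
  intros H1 H2. replace l2 with (l2 + 0) by ring. rewrite <- (Cmod_eq_0 (l1 - l2)). ring.
  apply Rle_antisym; [|apply Cmod_ge_0].
  apply Rnot_lt_le. intros Hlt.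
  pose proof (Cser_bound u l1 l2 (Cmod (l1 - l2) / 2) H1) as H.
  assert (Cmod (l1 - l2) <= Cmod (l1 - l2) / 2)%R; [|lra].
  apply H. destruct (H2 (Cmod (l1 - l2) / 2)%R ltac:(lra)) as [N0 HN].
  exists N0. intros; apply Rlt_le; auto.
Qed.

Lemma Cser_plus u v l m : Cser u l -> Cser v m -> Cser (fun k => u k + v k) (l + m).
Proof.
  intros Hu Hv eps He.
  destruct (Hu (eps/2)%R ltac:(lra)) as [N1 H1]. destruct (Hv (eps/2)%R ltac:(lra)) as [N2 H2].
  exists (max N1 N2). intros N HN. rewrite csum_plus.
  replace (csum N u + csum N v - (l + m)) with ((csum N u - l) + (csum N v - m)) by ring.
  eapply Rle_lt_trans. apply Cmod_triangle.
  specialize (H1 N ltac:(lia)). specialize (H2 N ltac:(lia)). lra.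
Qed.

Lemma Cser_scal c u l : Cser u l -> Cser (fun k => c * u k) (c * l).
Proof.
  intros Hu eps He.
  destruct (Hu (eps / (1 + Cmod c))%R) as [N1 H1].
  { apply Rdiv_lt_0_compat; auto. pose proof (Cmod_ge_0 c); lra. }
  exists N1. intros N HN. rewrite csum_scal.
  replace (c * csum N u - c * l) with (c * (csum N u - l)) by ring.
  rewrite Cmod_mult. specialize (H1 N HN).
  pose proof (Cmod_ge_0 c). pose proof (Cmod_ge_0 (csum N u - l)).
  apply Rmult_lt_compat_l with (r := (1 + Cmod c)%R) in H1; [|lra].
  replace ((1 + Cmod c) * (eps / (1 + Cmod c)))%R with eps in H1 by (field; lra). nra.
Qed.

Lemma Cser_ext u v l : (forall k, u k = v k) -> Cser u l -> Cser v l.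
Proof. intros E H eps He. destruct (H eps He) as [N0 HN]. exists N0. intros N HN'.
  rewrite (csum_ext N v u) by (intros; auto). auto. Qed.

Lemma Cser_shift u l : Cser u l -> Cser (fun k => u (S k)) (l - u 0%nat).
Proof.
  intros H eps He. destruct (H eps He) as [N0 HN]. exists N0. intros N HN'.
  specialize (HN (S N) ltac:(lia)). rewrite csum_shift in HN.
  replace (csum N (fun k => u (S k)) - (l - u 0%nat)) with (u 0%nat + csum N (fun k => u (S k)) - l) by ring. auto.
Qed.

Lemma Cser_unshift u l : Cser (fun k => u (S k)) l -> Cser u (u 0%nat + l).
Proof.
  intros H eps He. destruct (H eps He) as [N0 HN]. exists (S N0). intros N HN'.
  destruct N as [|N]; [lia|]. specialize (HN N ltac:(lia)). rewrite csum_shift.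
  replace (u 0%nat + csum N (fun k => u (S k)) - (u 0%nat + l)) with (csum N (fun k => u (S k)) - l) by ring. auto.
Qed.

Lemma Cser_terms_bounded u l : Cser u l -> exists M, forall k, (Cmod (u k) <= M)%R.
Proof.
  intros H. destruct (H 1%R ltac:(lra)) as [N0 HN].
  exists (rsum (S N0) (fun k => Cmod (u k)) + 2)%R. intros k.
  destruct (Compare_dec.le_lt_dec k N0) as [Hk|Hk].
  - assert (Cmod (u k) <= rsum (S N0) (fun k => Cmod (u k)))%R; [|lra].
    clear HN. induction N0.
    + assert (k = 0%nat) by lia. subst. simpl. lra.
    + destruct (Nat.eq_dec k (S N0)).
      * subst. simpl. pose proof (rsum_nonneg (S N0) (fun k => Cmod (u k)) ltac:(intros; apply Cmod_ge_0)). simpl in H0. lra.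
      * assert (k <= N0)%nat by lia. specialize (IHN0 H0). simpl in *. pose proof (Cmod_ge_0 (u (S N0))). lra.
  - pose proof (HN k ltac:(lia)). pose proof (HN (S k) ltac:(lia)). simpl in H1.
    replace (u k) with ((csum k u + u k - l) - (csum k u - l)) by ring.
    eapply Rle_trans. apply Cmod_triangle. rewrite Cmod_opp.
    pose proof (rsum_nonneg (S N0) (fun k => Cmod (u k)) ltac:(intros; apply Cmod_ge_0)). lra.
Qed.

Lemma Re_csum n f : Re (csum n f) = rsum n (fun k => Re (f k)).
Proof. induction n; simpl. auto. rewrite <- IHn. auto. Qed.

Lemma Cser_Re w u l : Cser u l -> Rser (fun k => Re (w * u k)) (Re (w * l)).
Proof.
  intros H. apply Cser_scal with (c := w) in H.
  intros eps He. destruct (H eps He) as [N0 HN]. exists N0. intros N HN'.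
  specialize (HN N HN'). rewrite <- Re_csum.
  replace (Rminus (Re (csum N (fun k => w * u k))) (Re (w * l))) with (Re (csum N (fun k => w * u k) - w * l)).
  2:{ destruct (csum N (fun k => w * u k)), (w * l). unfold Cminus, Cplus, Copp. simpl. ring. }
  eapply Rle_lt_trans. apply re_le_Cmod. auto.
Qed.

Lemma pow_n_Cpow (x : C) k : @pow_n C_AbsRing x k = x ^ k.
Proof. induction k; simpl. auto. rewrite IHk. auto. Qed.

Lemma is_pseries_Cser (a : nat -> C) z l :
  @is_pseries C_AbsRing C_NormedModule a z l -> Cser (fun k => a k * z ^ k) l.
Proof.
  intros H. apply is_series_Cser in H. eapply Cser_ext; [|exact H].
  intros k. simpl. rewrite pow_n_Cpow. change (z ^ k * a k = a k * z ^ k). ring.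
Qed.

Open Scope C_scope.

Lemma C_eq_ReIm (c d : C) : Re c = Re d -> Im c = Im d -> c = d.
Proof. destruct c, d. simpl. intros; subst; auto. Qed.

Lemma Re_mult_RtoC w (t : R) c : Re (w * (RtoC t * c)) = (t * Re (w * c))%R.
Proof. destruct w, c. unfold Cmult, RtoC. simpl. ring. Qed.

Lemma Re_w_le w c : (Cmod w <= 1)%R -> (Rabs (Re (w * c)) <= Cmod c)%R.
Proof. intros H. eapply Rle_trans. apply re_le_Cmod. rewrite Cmod_mult.
  pose proof (Cmod_ge_0 c). pose proof (Cmod_ge_0 w). nra. Qed.

Lemma Cser_real_pseries w (d : nat -> C) (x : R) l :
  Cser (fun k => d k * RtoC x ^ k) l ->
  is_pseries (fun k => Re (w * d k)) x (Re (w * l)).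
Proof.
  intros H. apply Cser_Re with (w := w) in H. apply Rser_is_series in H.
  unfold is_pseries. eapply is_series_ext; [|exact H]. intros k.
  rewrite pow_n_pow. rewrite <- RtoC_pow.
  replace (d k * RtoC (x ^ k)) with (RtoC (x ^ k) * d k) by ring.
  rewrite Re_mult_RtoC. reflexivity.
Qed.

Lemma CV_radius_from_Cser w (d : nat -> C) :
  (forall r : R, (0 <= r < 1)%R -> exists l, Cser (fun k => d k * RtoC r ^ k) l) ->
  forall x : R, (Rabs x < 1)%R -> Rbar_lt (Rabs x) (CV_radius (fun k => Re (w * d k))).
Proof.
  intros H x Hx.
  assert (Hub : forall r, (0 <= r < 1)%R -> Rbar_le r (CV_radius (fun k => Re (w * d k)))).
  { intros r Hr. destruct (CV_radius_bounded (fun k => Re (w * d k))) as [Hu _].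
    apply Hu. destruct (H r Hr) as [l Hl]. destruct (Cser_terms_bounded _ _ Hl) as [M HM].
    exists (Cmod w * M)%R. intros n. specialize (HM n).
    rewrite <- RtoC_pow in HM. 
    replace (Re (w * d n) * r ^ n)%R with (Re (w * (RtoC (r ^ n) * d n))).
    2:{ rewrite Re_mult_RtoC. ring. }
    eapply Rle_trans. apply re_le_Cmod. rewrite Cmod_mult.
    replace (RtoC (r ^ n) * d n) with (d n * RtoC (r ^ n)) by ring.
    apply Rmult_le_compat_l. apply Cmod_ge_0. auto. }
  pose proof (Rabs_pos x).
  specialize (Hub ((Rabs x + 1) / 2)%R ltac:(lra)).
  destruct (CV_radius (fun k => Re (w * d k))); simpl in *; auto. lra.
Qed.

Lemma real_direction_derive w (f : C -> C) (x : R) (l : C) :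
  (Cmod w <= 1)%R ->
  @is_derive C_AbsRing C_NormedModule f (RtoC x) l ->
  is_derive (fun t : R => Re (w * f (RtoC t))) x (Re (w * l)).
Proof.
  intros Hw [_ Hd]. apply is_derive_Reals. intros eps Heps.
  specialize (Hd (RtoC x) (fun P H => H) (mkposreal (eps / 2) ltac:(lra))).
  destruct Hd as [del Hdel].
  exists del. intros h Hh0 Hh.
  assert (Hb : @ball (AbsRing_UniformSpace C_AbsRing) (RtoC x) del (RtoC (x + h))).
  { unfold ball; simpl; unfold AbsRing_ball. change abs with Cmod.
    change (Cmod (RtoC (x+h) - RtoC x) < del)%R.
    replace (RtoC (x + h) - RtoC x) with (RtoC h).
    2:{ rewrite <- RtoC_minus. f_equal. ring. }
    rewrite Cmod_R. auto. }
  specialize (Hdel _ Hb). simpl in Hdel.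
  change (Cmod (f (RtoC (x + h)) - f (RtoC x) - (RtoC (x + h) - RtoC x) * l) <= eps / 2 * Cmod (RtoC (x + h) - RtoC x))%R in Hdel.
  replace (RtoC (x + h) - RtoC x) with (RtoC h) in Hdel.
  2:{ rewrite <- RtoC_minus. f_equal. ring. }
  rewrite Cmod_R in Hdel.
  replace ((Re (w * f (RtoC (x + h))) - Re (w * f (RtoC x))) / h - Re (w * l))%R
    with (Re (w * (f (RtoC (x + h)) - f (RtoC x) - RtoC h * l)) / h)%R.
  2:{ destruct w, (f (RtoC (x + h))), (f (RtoC x)), l. unfold Cmult, Cminus, Cplus, Copp, RtoC. simpl. field. auto. }
  unfold Rdiv. rewrite Rabs_mult, Rabs_inv.
  pose proof (Re_w_le w (f (RtoC (x + h)) - f (RtoC x) - RtoC h * l) Hw).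
  pose proof (Rabs_pos_lt h Hh0).
  apply Rle_lt_trans with (eps / 2 * Rabs h * / Rabs h)%R.
  apply Rmult_le_compat_r. left; apply Rinv_0_lt_compat; auto. lra.
  field_simplify; lra.
Qed.

Open Scope C_scope.

Definition beta (b : nat -> C) (k : nat) : C :=
  match k with O => 0 | S O => 0 | S (S j) => b j / 2 end.



Lemma Cser_beta (b : nat -> C) z l :
  Cser (fun k => b k * z ^ k) l -> Cser (fun k => beta b k * z ^ k) (/ 2 * z ^ 2 * l).
Proof.
  intros H. apply Cser_scal with (c := / 2 * z ^ 2) in H.
  assert (H1 : Cser (fun k => (fun k => beta b k * z ^ k) (S (S k))) (/ 2 * z ^ 2 * l)).
  { eapply Cser_ext; [|exact H]. intros k. simpl. field. }
  apply (Cser_unshift (fun k => beta b (S k) * z ^ (S k))) in H1.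
  apply (Cser_unshift (fun k => beta b k * z ^ k)) in H1. simpl in H1.
  replace (0 * 1 + (0 * (z * 1) + / 2 * (z * (z * 1)) * l)) with (/ 2 * z ^ 2 * l) in H1 by (simpl; ring).
  exact H1.
Qed.

Lemma locally_unit_disc (x : R) : (Rabs x < 1)%R ->
  locally x (fun t : R => (Rabs t < 1)%R).
Proof.
  intros Hx. exists (mkposreal ((1 - Rabs x) / 2) ltac:(lra)). intros y Hy.
  unfold ball in Hy; simpl in Hy; unfold AbsRing_ball, abs, minus, plus, opp in Hy; simpl in Hy.
  pose proof (Rabs_triang_inv y x). unfold Rminus in *. lra.
Qed.

Section Coef.
Variables (a b : nat -> C) (f f' phi : C -> C).
Hypothesis Hf : forall z, (Cmod z < 1)%R -> Cser (fun k => a k * z ^ k) (f z).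
Hypothesis Hd : forall z, (Cmod z < 1)%R -> @is_derive C_AbsRing C_NormedModule f z (f' z).
Hypothesis Hb : forall z, (Cmod z < 1)%R -> Cser (fun k => b k * z ^ k) (phi z).
Hypothesis Hrel : forall z, (Cmod z < 1)%R -> z * f' z - f z = / 2 * z ^ 2 * phi z.

Lemma Cser_zf' z : (Cmod z < 1)%R -> Cser (fun k => (a k + beta b k) * z ^ k) (z * f' z).
Proof.
  intros Hz. replace (z * f' z) with (f z + / 2 * z ^ 2 * phi z).
  2:{ rewrite <- Hrel by auto. ring. }
  eapply Cser_ext; [|apply Cser_plus; [apply Hf, Hz | apply Cser_beta, Hb, Hz]].
  intros k; simpl. ring.
Qed.

Section W.
Variable w : C.
Hypothesis Hw : (Cmod w <= 1)%R.
Let alpha k := Re (w * a k).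

Lemma CV_alpha x : (Rabs x < 1)%R -> Rbar_lt (Rabs x) (CV_radius alpha).
Proof.
  apply CV_radius_from_Cser. intros r Hr. exists (f (RtoC r)). apply Hf.
  rewrite Cmod_R, Rabs_right; lra.
Qed.

Lemma PSeries_alpha t : (Rabs t < 1)%R -> PSeries alpha t = Re (w * f (RtoC t)).
Proof.
  intros Ht. apply is_pseries_unique. apply Cser_real_pseries. apply Hf. rewrite Cmod_R; auto.
Qed.

Lemma deriv_real x : (Rabs x < 1)%R -> Re (w * f' (RtoC x)) = PSeries (PS_derive alpha) x.
Proof.
  intros Hx.
  assert (H1 : is_derive (fun t : R => Re (w * f (RtoC t))) x (Re (w * f' (RtoC x)))).
  { apply real_direction_derive; auto. apply Hd. rewrite Cmod_R; auto. }
  assert (H2 : is_derive (fun t : R => Re (w * f (RtoC t))) x (PSeries (PS_derive alpha) x)).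
  { eapply is_derive_ext_loc; [|apply is_derive_PSeries, CV_alpha, Hx].
    eapply filter_imp; [|apply locally_unit_disc, Hx]. intros t Ht. simpl.
    rewrite PSeries_alpha; auto. }
  apply is_derive_unique in H1. apply is_derive_unique in H2. congruence.
Qed.

Lemma coef_real k : (INR k * Re (w * a k))%R = Re (w * (a k + beta b k)).
Proof.
  set (c1 := fun k => (INR k * alpha k)%R).
  set (c2 := fun k => Re (w * (a k + beta b k))).
  assert (Ec1 : forall k, c1 k = PS_incr_1 (PS_derive alpha) k).
  { intros [|j]; unfold c1; simpl. rewrite Rmult_0_l; reflexivity. unfold PS_derive. auto. }
  assert (CV1 : forall x, (Rabs x < 1)%R -> Rbar_lt (Rabs x) (CV_radius c1)).
  { intros x Hx. rewrite (CV_radius_ext _ _ Ec1), CV_radius_incr_1, CV_radius_derive. apply CV_alpha, Hx. }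
  assert (CV2 : forall x, (Rabs x < 1)%R -> Rbar_lt (Rabs x) (CV_radius c2)).
  { apply CV_radius_from_Cser. intros r Hr. exists (RtoC r * f' (RtoC r)). apply Cser_zf'.
    rewrite Cmod_R, Rabs_right; lra. }
  assert (E : forall x, (Rabs x < 1)%R -> PSeries c1 x = PSeries c2 x).
  { intros x Hx.
    assert (P1 : is_pseries c1 x (x * PSeries (PS_derive alpha) x)%R).
    { eapply is_pseries_ext. intros j. symmetry. apply Ec1.
      apply (is_pseries_incr_1 (PS_derive alpha) x). apply PSeries_correct, CV_radius_inside.
      rewrite CV_radius_derive. apply CV_alpha, Hx. }
    assert (P2 : is_pseries c2 x (Re (w * (RtoC x * f' (RtoC x))))).
    { apply Cser_real_pseries. apply Cser_zf'. rewrite Cmod_R; auto. }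
    apply is_pseries_unique in P1. apply is_pseries_unique in P2.
    rewrite P1, P2, Re_mult_RtoC, deriv_real; auto. }
  assert (Hk := PSeries_ext_recip c1 c2 k).
  assert (H0 : (Rabs 0 < 1)%R) by (rewrite Rabs_R0; lra).
  specialize (CV1 0%R H0). specialize (CV2 0%R H0). rewrite Rabs_R0 in CV1, CV2.
  apply Hk; [apply CV1 | apply CV2 |].
  eapply filter_imp; [|apply locally_unit_disc, H0]. intros t Ht. apply E, Ht.
Qed.

Lemma deriv0_real : a 1%nat = 1 -> Re (w * f' 0) = Re w.
Proof.
  intros Ha1. assert (H0 : (Rabs 0 < 1)%R) by (rewrite Rabs_R0; lra).
  pose proof (deriv_real 0 H0) as H. rewrite PSeries_0 in H. unfold PS_derive in H.
  unfold alpha in H. rewrite Ha1 in H. rewrite H. destruct w. simpl. ring.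
Qed.
End W.

Lemma coef_id k : RtoC (INR k) * a k = a k + beta b k.
Proof.
  apply C_eq_ReIm.
  - pose proof (coef_real 1 ltac:(rewrite Cmod_1; lra) k) as H.
    rewrite !Cmult_1_l in H. rewrite <- H. destruct (a k). simpl. ring.
  - assert (Hw : (Cmod (- Ci) <= 1)%R) by (rewrite Cmod_opp, Cmod_Ci; lra).
    pose proof (coef_real (- Ci) Hw k) as H.
    destruct (a k) as [p q], (a k + beta b k) as [p' q']. simpl in *. lra.
Qed.

Lemma f'0 : a 1%nat = 1 -> f' 0 = 1.
Proof.
  intros Ha1. apply C_eq_ReIm.
  - pose proof (deriv0_real 1 ltac:(rewrite Cmod_1; lra) Ha1) as H.
    rewrite Cmult_1_l in H. rewrite H. auto.
  - assert (Hw : (Cmod (- Ci) <= 1)%R) by (rewrite Cmod_opp, Cmod_Ci; lra).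
    pose proof (deriv0_real (- Ci) Hw Ha1) as H.
    destruct (f' 0) as [p q]. simpl in *. lra.
Qed.
End Coef.

Open Scope C_scope.

Definition cis (t : R) : C := (cos t, sin t).

Lemma cis_pow t n : cis t ^ n = cis (INR n * t).
Proof.
  induction n.
  - simpl. unfold cis. rewrite Rmult_0_l, cos_0, sin_0. reflexivity.
  - rewrite Cpow_S, IHn. unfold cis, Cmult. simpl fst; simpl snd. rewrite S_INR.
    replace ((INR n + 1) * t)%R with (t + INR n * t)%R by ring.
    rewrite cos_plus, sin_plus. f_equal; ring.
Qed.

Lemma Cmod_cis t : Cmod (cis t) = 1%R.
Proof. unfold Cmod, cis. simpl fst; simpl snd. replace (cos t ^ 2 + sin t ^ 2)%R with 1%R. apply sqrt_1.
  pose proof (sin2_cos2 t). unfold Rsqr in H. simpl. lra. Qed.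

Lemma Cpow_pow (c : C) n m : (c ^ n) ^ m = c ^ (n * m).
Proof. induction m. simpl. rewrite Nat.mul_0_r. auto.
  rewrite Cpow_S, IHm. replace (n * S m)%nat with (n + n * m)%nat by lia. rewrite Cpow_add_r. auto. Qed.

Lemma geom_csum (x : C) n : (x - 1) * csum n (fun j => x ^ j) = x ^ n - 1.
Proof. induction n; simpl. ring. rewrite Cmult_plus_distr_l, IHn. ring. Qed.

Lemma Cmult_integral (a b : C) : a * b = 0 -> a = 0 \/ b = 0.
Proof. intros H. apply (f_equal Cmod) in H. rewrite Cmod_mult, Cmod_0 in H.
  apply Rmult_integral in H. destruct H; [left|right]; apply Cmod_eq_0; auto. Qed.

Lemma geom_zero (x : C) n : x <> 1 -> x ^ n = 1 -> csum n (fun j => x ^ j) = 0.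
Proof.
  intros H1 H2. pose proof (geom_csum x n) as E. rewrite H2 in E.
  replace (1 - 1) with (RtoC 0) in E by ring.
  apply Cmult_integral in E. destruct E as [E|E]; auto.
  exfalso. apply H1. replace x with (x - 1 + 1) by ring. rewrite E. ring.
Qed.

Section Roots.
Variable N : nat.
Hypothesis HN : (0 < N)%nat.
Definition om := cis (2 * PI / INR N).

Lemma om_pow d : om ^ d = cis (2 * PI * INR d / INR N).
Proof. unfold om. rewrite cis_pow. f_equal. field. apply not_0_INR. lia. Qed.

Lemma om_N : om ^ N = 1.
Proof. rewrite om_pow. unfold cis. replace (2 * PI * INR N / INR N)%R with (2 * PI)%R.
  rewrite cos_2PI, sin_2PI. reflexivity. field. apply not_0_INR; lia. Qed.

Lemma om_ne1 d : (0 < d < N)%nat -> om ^ d <> 1.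
Proof.
  intros Hd E. rewrite om_pow in E. unfold cis in E. injection E as E1 E2.
  set (t := (PI * INR d / INR N)%R).
  assert (Ht : (0 < t < PI)%R).
  { unfold t. pose proof PI_RGT_0. assert (0 < INR d)%R by (apply lt_0_INR; lia).
    assert (INR d < INR N)%R by (apply lt_INR; lia).
    split. apply Rdiv_lt_0_compat; [nra|lra].
    apply Rmult_lt_reg_r with (INR N); [lra|]. field_simplify; [nra|lra]. }
  replace (2 * PI * INR d / INR N)%R with (2 * t)%R in E1 by (unfold t; field; apply not_0_INR; lia).
  rewrite cos_2a_sin in E1. pose proof (sin_gt_0 t (proj1 Ht) (proj2 Ht)). nra.
Qed.

Lemma Cmod_om_pow j : Cmod (om ^ j) = 1%R.
Proof. rewrite Cmod_pow. unfold om. rewrite Cmod_cis. apply pow1. Qed.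

Lemma conj_mod1 (u : C) : Cmod u = 1%R -> u * Cconj u = 1.
Proof. intros H. rewrite <- Cmod2_conj, H. rewrite pow1. reflexivity. Qed.

Lemma csum_conj n f : Cconj (csum n f) = csum n (fun k => Cconj (f k)).
Proof. induction n; simpl. apply C_eq_ReIm; simpl; ring. rewrite Cplus_conj, IHn. auto. Qed.

Lemma orth_ge m m' : (m' <= m < N)%nat ->
  csum N (fun j => (om ^ j) ^ m * Cconj ((om ^ j) ^ m')) = if Nat.eq_dec m m' then RtoC (INR N) else 0.
Proof.
  intros Hm.
  assert (E : forall j, (om ^ j) ^ m * Cconj ((om ^ j) ^ m') = (om ^ (m - m')) ^ j).
  { intros j. replace m with ((m - m') + m')%nat at 1 by lia. rewrite Cpow_add_r.
    rewrite <- Cmult_assoc, conj_mod1. rewrite Cmult_1_r, !Cpow_pow. f_equal. lia.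
    rewrite Cmod_pow, Cmod_om_pow. apply pow1. }
  rewrite (csum_ext N _ _ (fun j _ => E j)).
  destruct (Nat.eq_dec m m').
  - subst. rewrite Nat.sub_diag. simpl. clear. induction N as [|K IH]. simpl. auto.
    simpl csum. rewrite IH, S_INR, Cpow_1_l. rewrite RtoC_plus. auto.
  - apply geom_zero. apply om_ne1. lia. rewrite Cpow_pow, Nat.mul_comm, <- Cpow_pow, om_N. apply Cpow_1_l.
Qed.

Lemma orth m m' : (m < N)%nat -> (m' < N)%nat ->
  csum N (fun j => (om ^ j) ^ m * Cconj ((om ^ j) ^ m')) = if Nat.eq_dec m m' then RtoC (INR N) else 0.
Proof.
  intros H1 H2. destruct (Compare_dec.le_lt_dec m' m).
  - apply orth_ge; lia.
  - pose proof (orth_ge m' m ltac:(lia)) as E.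
    apply (f_equal Cconj) in E. rewrite csum_conj in E.
    replace (csum N (fun j => (om ^ j) ^ m * Cconj ((om ^ j) ^ m'))) with
      (csum N (fun k => Cconj ((om ^ k) ^ m' * Cconj ((om ^ k) ^ m)))).
    2:{ apply csum_ext. intros k _. rewrite Cmult_conj, Cconj_conj. ring. }
    rewrite E. destruct (Nat.eq_dec m' m), (Nat.eq_dec m m'); try lia.
    apply C_eq_ReIm; simpl; ring.
Qed.
End Roots.

Lemma csum_mult n m f g : csum n f * csum m g = csum n (fun i => csum m (fun j => f i * g j)).
Proof. induction n; simpl. ring. rewrite <- IHn. rewrite csum_scal. ring. Qed.

Lemma csum_swap n m (F : nat -> nat -> C) :
  csum n (fun i => csum m (fun j => F i j)) = csum m (fun j => csum n (fun i => F i j)).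
Proof. induction n; simpl. clear. induction m; simpl. auto. rewrite <- IHm. ring.
  rewrite IHn. rewrite <- csum_plus. auto. Qed.

Lemma csum_delta n m (g : nat -> C) (c : C) : (m < n)%nat ->
  csum n (fun j => g j * (if Nat.eq_dec m j then c else 0)) = g m * c.
Proof.
  induction n; intros H; simpl. lia.
  destruct (Nat.eq_dec m n).
  - subst. replace (csum n (fun j => g j * (if Nat.eq_dec n j then c else 0))) with (csum n (fun _ => RtoC 0)).
    + clear. assert (csum n (fun _ => RtoC 0) = 0) by (induction n; simpl; [auto| rewrite IHn; ring]). rewrite H. ring.
    + apply csum_ext. intros k Hk. destruct (Nat.eq_dec n k). lia. ring.
  - rewrite IHn by lia. ring.
Qed.

Lemma parseval_discrete N (q : nat -> C) : (0 < N)%nat ->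
  csum N (fun j => csum N (fun m => q m * (om N ^ j) ^ m) * Cconj (csum N (fun m => q m * (om N ^ j) ^ m)))
  = RtoC (INR N) * csum N (fun m => q m * Cconj (q m)).
Proof.
  intros HN.
  transitivity (csum N (fun j => csum N (fun m => csum N (fun m' => (q m * Cconj (q m')) * ((om N ^ j) ^ m * Cconj ((om N ^ j) ^ m')))))).
  { apply csum_ext. intros j _. rewrite csum_conj, csum_mult. apply csum_ext. intros m _. apply csum_ext. intros m' _.
    rewrite Cmult_conj. ring. }
  rewrite csum_swap. rewrite <- csum_scal. apply csum_ext. intros m Hm.
  rewrite csum_swap.
  transitivity (csum N (fun m' => (q m * Cconj (q m')) * (if Nat.eq_dec m m' then RtoC (INR N) else 0))).
  { apply csum_ext. intros m' Hm'. rewrite csum_scal. rewrite orth; auto. }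
  rewrite csum_delta by auto. ring.
Qed.

Open Scope C_scope.

Lemma rsum_geom q n : (0 <= q < 1)%R -> (rsum n (fun i => q ^ i) <= / (1 - q))%R.
Proof.
  intros Hq. assert (E : ((1 - q) * rsum n (fun i => q ^ i) = 1 - q ^ n)%R).
  { induction n; simpl. ring. rewrite Rmult_plus_distr_l, IHn. ring. }
  assert (0 <= q ^ n)%R by (apply pow_le; lra).
  apply Rmult_le_reg_l with (1 - q)%R. lra. rewrite E. rewrite Rinv_r; lra.
Qed.

Lemma rsum_const n c : rsum n (fun _ => c) = (INR n * c)%R.
Proof. induction n as [|n IH]. simpl. ring. simpl rsum. rewrite IH, S_INR. ring. Qed.

Lemma pow_le1 x n : (0 <= x <= 1)%R -> (x ^ n <= 1)%R.
Proof. intros H. induction n; simpl. lra. assert (0 <= x ^ n)%R by (apply pow_le; lra). nra. Qed.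

Lemma bernoulli d n : (0 <= d <= 1)%R -> (1 - INR n * d <= (1 - d) ^ n)%R.
Proof.
  intros Hd. induction n. simpl. lra.
  rewrite S_INR. simpl. assert (0 <= (1 - d) ^ n)%R by (apply pow_le; lra).
  pose proof (pos_INR n). nra.
Qed.

Section Pars.
Variables (b : nat -> C) (phi : C -> C).
Hypothesis Hb : forall z, (Cmod z < 1)%R -> Cser (fun k => b k * z ^ k) (phi z).
Hypothesis Hphi : forall z, (Cmod z < 1)%R -> (Cmod (phi z) <= 1)%R.

Lemma tail_bound rho : (0 <= rho < 1)%R -> exists K q, (0 <= K)%R /\ (0 <= q < 1)%R /\
  forall x, Cmod x = rho -> forall M, (Cmod (phi x - csum M (fun k => b k * x ^ k))%C <= K * q ^ M / (1 - q))%R.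
Proof.
  intros Hr. set (r' := ((1 + rho) / 2)%R).
  destruct (Cser_terms_bounded _ _ (Hb (RtoC r') ltac:(rewrite Cmod_R, Rabs_right; unfold r'; lra))) as [K HK].
  assert (HK0 : (0 <= K)%R) by (eapply Rle_trans; [apply Cmod_ge_0|apply (HK 0%nat)]).
  exists K, (rho / r')%R. split; [auto|]. split.
  { unfold r'. split. apply Rdiv_le_0_compat; lra. apply Rmult_lt_reg_r with ((1+rho)/2)%R. lra.
    field_simplify; lra. }
  intros x Hx M. apply Cser_bound with (u := fun k => b k * x ^ k). apply Hb. lra.
  exists M. intros N HNM. replace N with (M + (N - M))%nat by lia. rewrite csum_split.
  replace (csum M (fun k => b k * x ^ k) + csum (N - M) (fun i => b (M + i)%nat * x ^ (M + i)) - csum M (fun k => b k * x ^ k))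
    with (csum (N - M) (fun i => b (M + i)%nat * x ^ (M + i))) by ring.
  eapply Rle_trans. apply Cmod_csum.
  eapply Rle_trans. apply rsum_le with (g := fun i => (K * (rho / r') ^ M * (rho / r') ^ i)%R).
  { intros i _. rewrite Cmod_mult, Cmod_pow, Hx. specialize (HK (M + i)%nat).
    rewrite Cmod_mult, Cmod_pow, Cmod_R, Rabs_right in HK by (unfold r'; lra).
    rewrite Rmult_assoc, <- pow_add. unfold Rdiv. rewrite Rpow_mult_distr, pow_inv.
    assert (Hr' : (0 < r' ^ (M + i))%R) by (apply pow_lt; unfold r'; lra).
    assert (E : (r' ^ (M + i) * / r' ^ (M + i) = 1)%R) by (field; lra).
    assert (0 <= rho ^ (M + i))%R by (apply pow_le; lra).
    assert (0 <= / r' ^ (M + i))%R by (left; apply Rinv_0_lt_compat; lra).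
    pose proof (Cmod_ge_0 (b (M + i)%nat)).
    replace (Cmod (b (M + i)%nat) * rho ^ (M + i))%R with (Cmod (b (M + i)%nat) * r' ^ (M + i) * (rho ^ (M + i) * / r' ^ (M + i)))%R.
    apply Rmult_le_compat_r. nra. auto.
    transitivity (Cmod (b (M + i)%nat) * rho ^ (M + i) * (r' ^ (M + i) * / r' ^ (M + i)))%R. ring. rewrite E. ring. }
  rewrite rsum_scal. unfold Rdiv. apply Rmult_le_compat_l.
  apply Rmult_le_pos; auto; apply pow_le; apply Rdiv_le_0_compat; unfold r'; lra.
  apply rsum_geom. split. apply Rdiv_le_0_compat; unfold r'; lra.
  apply Rmult_lt_reg_r with ((1+rho)/2)%R. lra. unfold r'. field_simplify; lra.
Qed.

Lemma parseval_rho rho L : (0 <= rho < 1)%R ->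
  (rsum L (fun m => (Cmod (b m) * rho ^ m) ^ 2) <= 1)%R.
Proof.
  intros Hr. apply Rnot_lt_le. intros HD.
  set (D := rsum L (fun m => (Cmod (b m) * rho ^ m) ^ 2)%R) in *.
  destruct (tail_bound rho Hr) as [K [q [HK [Hq Ht]]]].
  set (e0 := Rmin 1 ((D - 1) / 4)).
  assert (He0 : (0 < e0)%R) by (unfold e0; apply Rmin_pos; lra).
  destruct (pow_lt_1_zero q ltac:(rewrite Rabs_right; lra) (e0 * (1 - q) / (K + 1))%R) as [M0 HM0].
  { apply Rdiv_lt_0_compat; [apply Rmult_lt_0_compat|]; lra. }
  set (M := S (max L M0)).
  assert (HqM : (K * q ^ M / (1 - q) < e0)%R).
  { specialize (HM0 M ltac:(unfold M; lia)). rewrite Rabs_right in HM0 by (apply Rle_ge, pow_le; lra).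
    apply Rmult_lt_reg_r with (1 - q)%R. lra. unfold Rdiv. rewrite Rmult_assoc, Rinv_l, Rmult_1_r by lra.
    apply Rle_lt_trans with (K * (e0 * (1 - q) / (K + 1)))%R. apply Rmult_le_compat_l; lra.
    apply Rmult_lt_reg_r with (K + 1)%R. lra. field_simplify; nra. }
  assert (HMpos : (0 < M)%nat) by (unfold M; lia).
  set (qq := fun m => b m * RtoC (rho ^ m)).
  set (P := fun j => csum M (fun m => qq m * (om M ^ j) ^ m)).
  assert (HP : forall j, (Cmod (P j) <= 1 + e0)%R).
  { intros j. set (x := RtoC rho * om M ^ j).
    assert (Hx : Cmod x = rho). { unfold x. rewrite Cmod_mult, Cmod_om_pow, Cmod_R, Rabs_right; lra. }
    assert (EP : P j = csum M (fun k => b k * x ^ k)).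
    { unfold P, qq, x. apply csum_ext. intros k _. rewrite Cpow_mult_l, RtoC_pow. ring. }
    rewrite EP. replace (csum M (fun k => b k * x ^ k)) with (phi x - (phi x - csum M (fun k => b k * x ^ k))) by ring.
    eapply Rle_trans. unfold Cminus at 1. apply Cmod_triangle. rewrite Cmod_opp.
    pose proof (Ht x Hx M). pose proof (Hphi x ltac:(lra)). lra. }
  pose proof (parseval_discrete M qq HMpos) as Epar.
  assert (E1 : forall c : C, c * Cconj c = RtoC (Cmod c ^ 2)). { intros c. rewrite Cmod2_conj. auto. }
  assert (Epar' : csum M (fun j => RtoC (Cmod (P j) ^ 2)) = RtoC (INR M) * csum M (fun m => RtoC (Cmod (qq m) ^ 2))).
  { transitivity (csum M (fun j => P j * Cconj (P j))). apply csum_ext; intros; symmetry; apply E1.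
    unfold P. rewrite Epar. f_equal. apply csum_ext. intros; apply E1. }
  clear Epar. rename Epar' into Epar.
  rewrite <- !RtoC_rsum, <- RtoC_mult in Epar. apply RtoC_inj in Epar.
  assert (Hle : (rsum M (fun j => Cmod (P j) ^ 2) <= INR M * (1 + e0) ^ 2)%R).
  { eapply Rle_trans. apply rsum_le with (g := fun _ => ((1 + e0) ^ 2)%R).
    intros j _. pose proof (HP j). pose proof (Cmod_ge_0 (P j)). nra.
    rewrite rsum_const. lra. }
  assert (Hge : (D <= rsum M (fun m => Cmod (qq m) ^ 2)%R)%R).
  { unfold D. replace M with (L + (M - L))%nat by (unfold M; lia). rewrite rsum_split.
    assert (0 <= rsum (M - L) (fun i => Cmod (qq (L + i)%nat) ^ 2))%R.
    { apply rsum_nonneg. intros; apply pow2_ge_0. }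
    replace (rsum L (fun m => Cmod (qq m) ^ 2)%R) with (rsum L (fun m => (Cmod (b m) * rho ^ m) ^ 2)%R). lra.
    apply rsum_ext. intros k _. unfold qq. rewrite Cmod_mult, Cmod_R, Rabs_right. auto. apply Rle_ge, pow_le; lra. }
  assert (HINR : (0 < INR M)%R) by (apply lt_0_INR; lia).
  assert (Hq2 : (rsum M (fun m => Cmod (qq m) ^ 2) <= (1 + e0) ^ 2)%R).
  { apply Rmult_le_reg_l with (INR M); auto. lra. }
  assert (e0 <= 1 /\ e0 <= (D - 1) / 4)%R as [Ha Hb2] by (unfold e0; split; [apply Rmin_l|apply Rmin_r]).
  nra.
Qed.

Lemma parseval L : (rsum L (fun m => Cmod (b m) ^ 2) <= 1)%R.
Proof.
  apply Rnot_lt_le. intros HS. set (S1 := rsum L (fun m => Cmod (b m) ^ 2)%R) in *.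
  set (s := (/ S1)%R). assert (Hs : (0 < s < 1)%R).
  { unfold s. split. apply Rinv_0_lt_compat; lra. rewrite <- Rinv_1. apply Rinv_lt_contravar; lra. }
  set (d := ((1 - s) / (2 * (INR L + 1)))%R).
  pose proof (pos_INR L).
  assert (Hd : (0 < d <= 1 / 2)%R).
  { unfold d. split. apply Rdiv_lt_0_compat; lra. apply Rmult_le_reg_r with (2 * (INR L + 1))%R. lra.
    field_simplify; nra. }
  set (rho := (1 - d)%R).
  pose proof (parseval_rho rho L ltac:(unfold rho; lra)) as HPR.
  assert (HB : ((1 + s) / 2 <= rho ^ L)%R).
  { eapply Rle_trans; [|apply bernoulli; lra]. unfold d.
    apply Rmult_le_reg_r with (2 * (INR L + 1))%R. lra. field_simplify; nra. }
  assert (Hlow : ((rho ^ L) ^ 2 * S1 <= rsum L (fun m => (Cmod (b m) * rho ^ m) ^ 2)%R)%R).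
  { unfold S1. rewrite <- rsum_scal. apply rsum_le. intros m Hm.
    assert (rho ^ L <= rho ^ m)%R.
    { replace L with (m + (L - m))%nat by lia. rewrite pow_add.
      assert (0 <= rho ^ m)%R by (apply pow_le; unfold rho; lra).
      assert (rho ^ (L - m) <= 1)%R by (apply pow_le1; unfold rho; lra). nra. }
    assert (0 <= rho ^ L)%R by (apply pow_le; unfold rho; lra).
    rewrite Rpow_mult_distr. pose proof (pow2_ge_0 (Cmod (b m))).
    assert ((rho^L)^2 <= (rho^m)^2)%R by (apply pow_incr; lra). nra. }
  assert (S1 * s = 1)%R by (unfold s; field; lra).
  assert (((1 + s) / 2) ^ 2 * S1 > 1)%R.
  { assert (((1 + s) / 2) ^ 2 > s)%R by nra. nra. }
  assert (((1 + s) / 2) ^ 2 <= (rho ^ L) ^ 2)%R by (apply pow_incr; lra).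
  nra.
Qed.
End Pars.

Open Scope C_scope.

Lemma bk_le1 (b : nat -> C) : (forall L, rsum L (fun m => Cmod (b m) ^ 2)%R <= 1)%R -> forall k, (Cmod (b k) <= 1)%R.
Proof.
  intros H k. specialize (H (S k)). change (rsum k (fun m => Cmod (b m) ^ 2)%R + Cmod (b k) ^ 2 <= 1)%R in H.
  assert (0 <= rsum k (fun m => Cmod (b m) ^ 2)%R)%R by (apply rsum_nonneg; intros; apply pow2_ge_0).
  pose proof (Cmod_ge_0 (b k)). nra.
Qed.

Lemma Re_div_INR w c (n : R) : (n <> 0)%R -> Re (w * (c / RtoC n)) = (Re (w * c) / n)%R.
Proof. intros Hn. destruct w, c. unfold Cdiv, Cinv, Cmult, RtoC. simpl. field. auto. Qed.

Section Int.
Variables (b : nat -> C) (phi : C -> C).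
Hypothesis Hb : forall z, (Cmod z < 1)%R -> Cser (fun k => b k * z ^ k) (phi z).
Hypothesis Hphi : forall z, (Cmod z < 1)%R -> (Cmod (phi z) <= 1)%R.
Hypothesis Hb1 : forall k, (Cmod (b k) <= 1)%R.

Lemma int_bound z H : (Cmod z < 1)%R ->
  Cser (fun j => b j * z ^ (S j) / RtoC (INR (S j))) H -> (Cmod H <= Cmod z)%R.
Proof.
  intros Hz HH. set (r := Cmod z). pose proof (Cmod_ge_0 z) as Hr0. fold r in Hr0, Hz.
  destruct (Ceq_dec H 0) as [E|Hne]. { rewrite E, Cmod_0. auto. }
  assert (HmH : (0 < Cmod H)%R) by (apply Cmod_gt_0; auto).
  set (w := Cconj H / RtoC (Cmod H)).
  assert (Hw : Cmod w = 1%R).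
  { unfold w. rewrite Cmod_div. rewrite Cmod_conj, Cmod_R, Rabs_right. field. lra. lra.
    intro E. apply RtoC_inj in E. lra. }
  assert (HwH : Re (w * H) = Cmod H).
  { unfold w. replace (Cconj H / RtoC (Cmod H) * H) with ((H * Cconj H) / RtoC (Cmod H)) by (unfold Cdiv; ring).
    rewrite <- Cmod2_conj. unfold Cdiv. rewrite <- RtoC_inv, <- RtoC_mult. simpl. field. lra. lra. }
  set (D := fun j => b j * z ^ (S j)).
  set (d := fun j => Re (w * D j)).
  assert (Hser : forall t : R, (0 <= t <= 1)%R -> is_pseries d t (Re (w * (z * phi (RtoC t * z))))).
  { intros t Ht. apply Cser_real_pseries.
    assert (Htz : (Cmod (RtoC t * z) < 1)%R).
    { rewrite Cmod_mult, Cmod_R, Rabs_right by lra. fold r. nra. }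
    eapply Cser_ext; [|apply Cser_scal, Hb, Htz]. intros k. unfold D. rewrite Cpow_S, Cpow_mult_l. ring. }
  set (t0 := (2 / (1 + r))%R).
  assert (Hr1 : (r < 1)%R) by lra.
  assert (Ht0 : (1 < t0)%R). { unfold t0. apply Rmult_lt_reg_r with (1 + r)%R. lra.
    replace (2 / (1 + r) * (1 + r))%R with 2%R by (field; lra). lra. }
  assert (CV : Rbar_le t0 (CV_radius d)).
  { destruct (CV_radius_bounded d) as [Hu _]. apply Hu. exists 1%R. intros j.
    unfold d, D. rewrite Rabs_mult. eapply Rle_trans. apply Rmult_le_compat_r. apply Rabs_pos.
    apply Re_w_le. lra. rewrite Cmod_mult, Cmod_pow.
    assert (Hrt : (0 <= r * t0 <= 1)%R). { unfold t0. split. apply Rmult_le_pos; [lra|]. apply Rdiv_le_0_compat; lra.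
      apply Rmult_le_reg_r with (1 + r)%R. lra.
      replace (r * (2 / (1 + r)) * (1 + r))%R with (2 * r)%R by (field; lra). lra. }
    rewrite Rabs_right by (apply Rle_ge, pow_le; lra). fold r. simpl.
    replace (Cmod (b j) * (r * r ^ j) * t0 ^ j)%R with (Cmod (b j) * r * (r * t0) ^ j)%R by (rewrite Rpow_mult_distr; ring).
    pose proof (Hb1 j). pose proof (Cmod_ge_0 (b j)). pose proof (pow_le1 (r * t0) j Hrt). pose proof (pow_le (r * t0) j ltac:(lra)).
    assert (r <= 1)%R by lra. 
    assert (0 <= Cmod (b j) * r <= 1)%R by (split; nra). nra. }
  assert (CVt : forall t, (0 <= t <= 1)%R -> Rbar_lt (Rabs t) (CV_radius d)).
  { intros t Ht. destruct (CV_radius d); simpl in *; auto. rewrite Rabs_right; lra. }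
  assert (E1 : RInt (PSeries d) 0 1 = Re (w * H)).
  { rewrite RInt_PSeries by (apply CVt; lra).
    apply is_pseries_unique.
    set (D' := fun k : nat => match k return C with O => RtoC 0 | S j => b j * z ^ (S j) / RtoC (INR (S j)) end).
    assert (HD' : Cser (fun k => D' k * RtoC 1 ^ k) (0 + H)).
    { replace (0 + H) with (D' 0%nat * RtoC 1 ^ 0 + H) by (simpl; ring).
      apply (Cser_unshift (fun k => D' k * RtoC 1 ^ k)). eapply Cser_ext; [|exact HH].
      intros k. simpl. rewrite Cpow_1_l. ring. }
    apply Cser_real_pseries with (w := w) in HD'. rewrite Cplus_0_l in HD'.
    eapply is_pseries_ext; [|exact HD']. intros [|j].
    - change (Re (w * RtoC 0) = 0%R). rewrite Cmult_0_r. reflexivity.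
    - change (Re (w * (b j * z ^ S j / RtoC (INR (S j)))) = d j / INR (S j))%R.
      unfold d, D. rewrite Re_div_INR. reflexivity. apply not_0_INR. lia. }
  assert (E2 : (RInt (PSeries d) 0 1 <= RInt (fun _ => r) 0 1)%R).
  { apply RInt_le. lra. apply ex_RInt_PSeries. apply CVt; lra. apply ex_RInt_const.
    intros t Ht. rewrite (is_pseries_unique _ _ _ (Hser t ltac:(lra))).
    eapply Rle_trans. apply Rle_abs. eapply Rle_trans. apply Re_w_le. lra.
    rewrite Cmod_mult. fold r. pose proof (Hphi (RtoC t * z) ltac:(rewrite Cmod_mult, Cmod_R, Rabs_right by lra; fold r; nra)).
    pose proof (Cmod_ge_0 (phi (RtoC t * z))). nra. }
  rewrite RInt_const in E2. simpl in E2. change (RInt (PSeries d) 0 1 <= (1 - 0) * r)%R in E2.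
  lra.
Qed.
End Int.

Open Scope R_scope.

Lemma key_poly r beta : 0 < r <= 1/4 -> 1 + 4 * r^2 <= beta ->
  (1 + beta * (3/4) * r^2)^2 + beta^2 * r^2 <= beta^2 * (1 - r^2).
Proof.
  intros Hr Hb.
  set (d := beta - (1 + 4 * r^2)).
  assert (Hd : 0 <= d) by (unfold d; lra).
  replace beta with (1 + 4 * r^2 + d) by (unfold d; ring).
  assert (Hr2 : r^2 <= 1/16) by nra.
  assert (Hr2' : 0 < r^2) by nra.
  set (s := r^2) in *.
  assert (0 <= s * s) by nra.
  assert (s * s <= s / 16) by nra.
  assert (s*s*s <= s / 256) by nra.
  assert (s*s*s*s <= s / 4096) by nra.
  assert (0 <= d * s) by nra. assert (0 <= d * d) by nra.
  assert (d * s * s <= d * s / 16) by nra.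
  assert (d * d * s <= d * d / 16) by nra.
  assert (d * s * s * s <= d * s / 256) by nra.
  assert (d * d * s * s <= d * d / 256) by nra.
  nra.
Qed.

Lemma small_case (r Q X Y U V c rn : R) :
  0 < r <= 1/4 -> 4 * r^2 <= Q -> 0 <= X -> 0 <= Y -> 0 <= U -> 0 <= V ->
  X^2 * (1 - r^2) <= V -> Y^2 * (1 - r^2) <= U * r^2 -> U + V <= 1 ->
  0 < c <= 3/4 -> 0 <= rn <= r^2 ->
  c * rn * X + (rn * c * (1 + Q)) * (Y + c * rn * X) <= rn * c * (1 + Q).
Proof.
  intros Hr HQ HX HY HU HV H1 H2 H3 Hc Hrn.
  set (beta := 1 + Q). set (alpha := 1 + beta * (3/4) * r^2).
  assert (Hb : 1 + 4 * r^2 <= beta) by (unfold beta; lra).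
  pose proof (key_poly r beta Hr Hb) as K. fold alpha in K.
  assert (Hbeta : 1 <= beta) by nra.
  assert (Hs : 0 < 1 - r^2) by nra.
  assert (CS : (alpha * X + beta * Y)^2 <= beta^2).
  { assert (E : (alpha * X + beta * Y)^2 * r^2 <= (alpha^2 + beta^2 * r^2) * (X^2 * r^2 + Y^2)).
    { assert (0 <= (alpha * Y - beta * r^2 * X)^2) by apply pow2_ge_0.
      assert (Id : (alpha^2 + beta^2 * r^2) * (X^2 * r^2 + Y^2) - (alpha * X + beta * Y)^2 * r^2 = (alpha * Y - beta * r^2 * X)^2) by ring.
      lra. }
    assert (E2 : (X^2 * r^2 + Y^2) * (1 - r^2) <= r^2) by nra.
    assert (Hr2 : 0 < r^2) by nra.
    assert (0 <= alpha^2 + beta^2 * r^2) by nra.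
    assert ((alpha * X + beta * Y)^2 * r^2 * (1 - r^2) <= (alpha^2 + beta^2 * r^2) * r^2) by nra.
    assert ((alpha * X + beta * Y)^2 * (1 - r^2) <= (alpha^2 + beta^2 * r^2)).
    { apply Rmult_le_reg_r with (r^2). auto. nra. }
    nra. }
  assert (Hab : alpha * X + beta * Y <= beta).
  { assert (0 <= alpha * X + beta * Y). { unfold alpha. nra. } nra. }
  assert (Hcrn : c * rn <= 3/4 * r^2) by nra.
  assert (0 <= c * rn) by nra.
  assert (X + beta * (Y + c * rn * X) <= beta).
  { assert (beta * (c * rn * X) <= beta * (3/4 * r^2) * X).
    { replace (beta * (3/4 * r^2) * X) with (beta * (3/4 * r^2 * X)) by ring.
      apply Rmult_le_compat_l. lra. nra. }
    unfold alpha in Hab. nra. }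
  assert (0 <= rn * c) by nra.
  replace (c * rn * X + rn * c * beta * (Y + c * rn * X)) with (rn * c * (X + beta * (Y + c * rn * X))) by ring.
  apply Rmult_le_compat_l; auto.
Qed.

Lemma large_case r : 1/4 <= r < 1 ->
  1 <= (1 + 2 * r * sqrt (2 * r - r^2) / (1 - r)^2) * sqrt (1 - r^2) * (1 - r).
Proof.
  intros Hr.
  set (p := sqrt (2 * r - r^2)). set (S := sqrt (1 - r^2)).
  assert (Hp : p * p = 2 * r - r^2) by (apply sqrt_sqrt; nra).
  assert (HS : S * S = 1 - r^2) by (apply sqrt_sqrt; nra).
  assert (Hp0 : 0 <= p) by apply sqrt_pos. assert (HS0 : 0 <= S) by apply sqrt_pos.
  assert (Hp1 : 0.66 <= p) by nra.
  assert (HS1 : 1.25 * (1 - r) <= S) by nra.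
  replace ((1 + 2 * r * p / (1 - r)^2) * S * (1 - r)) with (S * (1 - r) + 2 * r * p * S / (1 - r)) by (field; lra).
  assert (2 * r * p * S / (1 - r) >= 2 * r * 0.66 * 1.25).
  { apply Rle_ge. apply Rmult_le_reg_r with (1 - r). lra.
    replace (2 * r * p * S / (1 - r) * (1 - r)) with (2 * r * p * S) by (field; lra).
    assert (p * S >= 0.66 * 1.25 * (1 - r)) by nra. nra. }
  nra.
Qed.

Lemma rhs_bound (n : nat) (r K : R) : (2 <= n)%nat -> 0 < r < 1 -> INR n + 1 <= K ->
  r ^ n * ((INR n + 1) / (2 * INR n)) * (1 + 2 * r * sqrt (2 * r - r^2) / (1 - r)^2)
  <= r ^ n * ((INR n + 1) / (2 * INR n) + sqrt (2 * r - r ^ 2) / (2 * (1 - r)) * K * (r / (1 - r))).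
Proof.
  intros Hn Hr HK.
  assert (Hn2 : 2 <= INR n) by (replace 2 with (INR 2) by (simpl; ring); apply le_INR; auto).
  assert (0 <= r ^ n) by (apply pow_le; lra).
  set (p := sqrt (2 * r - r^2)). assert (0 <= p) by apply sqrt_pos.
  rewrite Rmult_assoc. apply Rmult_le_compat_l; auto.
  assert (E : (INR n + 1) / (2 * INR n) * (1 + 2 * r * p / (1 - r) ^ 2) =
    (INR n + 1) / (2 * INR n) + (INR n + 1) / INR n * (r * p / (1 - r)^2)) by (field; lra).
  rewrite E. apply Rplus_le_compat_l.
  replace (p / (2 * (1 - r)) * K * (r / (1 - r))) with (K / 2 * (r * p / (1 - r)^2)) by (field; lra).
  apply Rmult_le_compat_r. apply Rdiv_le_0_compat. nra. nra.
  apply Rmult_le_reg_r with (2 * INR n). lra.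
  replace ((INR n + 1) / INR n * (2 * INR n)) with (2 * (INR n + 1)) by (field; lra).
  replace (K / 2 * (2 * INR n)) with (K * INR n) by field. nra.
Qed.

Lemma ln_le_x x : 0 < x -> ln (1 + x) <= x.
Proof. intros Hx. rewrite <- (ln_exp x) at 2. left. apply ln_increasing. lra. apply exp_ineq1. lra. Qed.

Lemma harmonic_ln k : ln (INR (S (S k))) <= sum_n (fun j => / INR (S j)) k.
Proof.
  induction k.
  - rewrite sum_O. simpl. replace (1 + 1) with (1 + 1) by ring. replace (/ 1) with 1 by field.
    apply ln_le_x. lra.
  - rewrite sum_Sn. change (plus (sum_n (fun j => / INR (S j)) k) (/ INR (S (S k)))) with
      (sum_n (fun j => / INR (S j)) k + / INR (S (S k))).
    assert (Hk : 0 < INR (S (S k))) by (apply lt_0_INR; lia).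
    replace (INR (S (S (S k)))) with (INR (S (S k)) * (1 + / INR (S (S k)))).
    2:{ rewrite (S_INR (S (S k))). field. lra. }
    assert (Hk' : 0 < / INR (S (S k))) by (apply Rinv_0_lt_compat; lra).
    rewrite ln_mult; [| exact Hk | lra].
    pose proof (ln_le_x (/ INR (S (S k))) ltac:(apply Rinv_0_lt_compat; lra)). lra.
Qed.

Definition euler_gamma' : R :=
  real (Lim_seq (fun m => (sum_n (fun k => / INR (S k)) (Nat.pred m) - ln (INR m))%R)).

Lemma euler_gamma_ge0 : 0 <= euler_gamma'.
Proof.
  unfold euler_gamma'.
  set (u := fun m => (sum_n (fun k => / INR (S k)) (Nat.pred m) - ln (INR m))%R).
  assert (Hu : forall m, 0 <= u m).
  { intros [|m]; unfold u.
    - simpl. rewrite sum_O. replace (ln 0) with 0. rewrite Rinv_1. lra. unfold ln. destruct (Rlt_dec 0 0) as [Hc|Hc]; [exfalso; lra|]. reflexivity.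
    - simpl Nat.pred. pose proof (harmonic_ln m).
      destruct m. simpl. rewrite ln_1. rewrite sum_O. simpl. lra.
      assert (ln (INR (S (S m))) <= ln (INR (S (S (S m))))).
      { left. apply ln_increasing. apply lt_0_INR; lia. apply lt_INR; lia. }
      lra. }
  assert (H : Rbar_le (Lim_seq (fun _ => 0)) (Lim_seq u)).
  { apply Lim_seq_le_loc. exists 0%nat. intros; apply Hu. }
  rewrite Lim_seq_const in H. destruct (Lim_seq u); simpl in *; lra.
Qed.

Open Scope R_scope.

Lemma rsum_S n f : rsum (S n) f = rsum n f + f n.
Proof. reflexivity. Qed.

Lemma rsum_CS n (x y : nat -> R) :
  (rsum n (fun i => x i * y i))^2 <= rsum n (fun i => x i ^ 2) * rsum n (fun i => y i ^ 2).
Proof.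
  induction n. simpl. lra.
  rewrite !rsum_S.
  set (A := rsum n (fun i => x i * y i)) in *.
  set (P := rsum n (fun i => x i ^ 2)) in *.
  set (Q := rsum n (fun i => y i ^ 2)) in *.
  assert (HP : 0 <= P) by (apply rsum_nonneg; intros; apply pow2_ge_0).
  assert (HQ : 0 <= Q) by (apply rsum_nonneg; intros; apply pow2_ge_0).
  set (u := x n) in *. set (v := y n) in *.
  assert (H2 : 2 * A * (u * v) <= P * v^2 + Q * u^2).
  { assert (E : (P * v^2 + Q * u^2)^2 - (2 * A * (u * v))^2 = (P * v^2 - Q * u^2)^2 + 4 * (P * Q - A^2) * (u * v)^2) by ring.
    assert (0 <= (P * v^2 - Q * u^2)^2) by apply pow2_ge_0.
    assert (0 <= (u * v)^2) by apply pow2_ge_0.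
    assert (0 <= P * Q - A^2) by lra.
    assert (0 <= P * v^2 + Q * u^2) by (assert (0 <= v^2) by apply pow2_ge_0; assert (0 <= u^2) by apply pow2_ge_0; nra).
    nra. }
  nra.
Qed.

Lemma rsum_geom2 n r : 0 <= r < 1 -> rsum n (fun i => (r ^ i) ^ 2) * (1 - r^2) <= 1.
Proof.
  intros Hr. rewrite (rsum_ext n _ (fun i => (r^2)^i)).
  2:{ intros; rewrite <- !pow_mult. f_equal. lia. }
  pose proof (rsum_geom (r^2) n ltac:(split; nra)).
  assert (0 < 1 - r^2) by nra.
  apply Rmult_le_compat_r with (r := 1 - r^2) in H; [|lra]. rewrite Rinv_l in H; lra.
Qed.

Open Scope C_scope.

Section Main.
Variables (a b : nat -> C) (f f' phi : C -> C).
Hypothesis Ha0 : a 0%nat = 0.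
Hypothesis Ha1 : a 1%nat = 1.
Hypothesis Hf : forall z, (Cmod z < 1)%R -> Cser (fun k => a k * z ^ k) (f z).
Hypothesis Hd : forall z, (Cmod z < 1)%R -> @is_derive C_AbsRing C_NormedModule f z (f' z).
Hypothesis Hb : forall z, (Cmod z < 1)%R -> Cser (fun k => b k * z ^ k) (phi z).
Hypothesis Hphi : forall z, (Cmod z < 1)%R -> (Cmod (phi z) <= 1)%R.
Hypothesis Hrel : forall z, (Cmod z < 1)%R -> z * f' z - f z = / 2 * z ^ 2 * phi z.

Definition e (j : nat) : C := RtoC (INR (S j)) * a (S j).
Definition kap (i : nat) : R := (INR (S (S i)) / (2 * INR (S i)))%R.

Lemma e0 : e 0%nat = 1.
Proof. unfold e. rewrite Ha1. simpl. ring. Qed.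

Lemma e_S i : e (S i) = RtoC (kap i) * b i.
Proof.
  pose proof (coef_id a b f f' phi Hf Hd Hb Hrel (S (S i))) as H. simpl beta in H.
  unfold e, kap. set (x := a (S (S i))) in *.
  assert (Hm : (0 < INR (S i))%R) by (apply lt_0_INR; lia).
  rewrite (S_INR (S i)) in *. set (m := INR (S i)) in *.
  rewrite RtoC_plus in H.
  assert (E : RtoC m * x = b i / 2). { replace (RtoC m * x) with ((RtoC m + RtoC 1) * x - x) by ring. rewrite H. ring. }
  replace (RtoC ((m + 1) / (2 * m))) with ((RtoC m + 1) / (2 * RtoC m)).
  2:{ apply C_eq_ReIm; unfold RtoC, Cdiv, Cinv, Cmult, Cplus; simpl; field; lra. }
  assert (Hm' : RtoC m <> 0). { intro E'. apply RtoC_inj in E'. lra. }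
  replace (b i) with (2 * (RtoC m * x)) by (rewrite E; field).
  rewrite RtoC_plus. field. auto.
Qed.

Lemma kap_pos i : (0 <= kap i)%R.
Proof. unfold kap. apply Rdiv_le_0_compat. apply pos_INR. assert (0 < INR (S i))%R by (apply lt_0_INR; lia). lra. Qed.

Lemma kap_le1 i : (kap i <= 1)%R.
Proof. unfold kap. assert (0 < INR (S i))%R by (apply lt_0_INR; lia). rewrite (S_INR (S i)).
  apply Rmult_le_reg_r with (2 * INR (S i))%R. lra. field_simplify; [|lra]. assert (1 <= INR (S i))%R.
  { replace 1%R with (INR 1) by reflexivity. apply le_INR. lia. } lra. Qed.

Lemma kap_le_c n i : (1 <= n)%nat -> (n <= S i)%nat -> (kap i <= (INR n + 1) / (2 * INR n))%R.
Proof.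
  intros H1 H2. unfold kap. rewrite (S_INR (S i)).
  assert (0 < INR n)%R by (apply lt_0_INR; lia). assert (INR n <= INR (S i))%R by (apply le_INR; lia).
  apply Rmult_le_reg_r with (2 * INR (S i) * (2 * INR n))%R. nra.
  field_simplify; nra.
Qed.

Lemma Cmod_e_S i : Cmod (e (S i)) = (kap i * Cmod (b i))%R.
Proof. rewrite e_S, Cmod_mult, Cmod_R, Rabs_right. auto. apply Rle_ge, kap_pos. Qed.

Lemma Fser z : (Cmod z < 1)%R -> z <> 0 -> Cser (fun j => e j * z ^ j) (f' z).
Proof.
  intros Hz Hz0. pose proof (Cser_zf' a b f f' phi Hf Hb Hrel z Hz) as H.
  apply Cser_shift in H. apply Cser_scal with (c := / z) in H.
  replace (/ z * (z * f' z - (a 0%nat + beta b 0) * z ^ 0)) with (f' z) in H.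
  2:{ rewrite Ha0. simpl. field. exact Hz0. }
  eapply Cser_ext; [|exact H].
  intros k. cbv beta. rewrite <- (coef_id a b f f' phi Hf Hd Hb Hrel (S k)). unfold e. rewrite Cpow_S. field. exact Hz0.
Qed.

Lemma Gbound z : (Cmod z < 1)%R -> z <> 0 -> (Cmod (f' z - 1) <= Cmod z)%R.
Proof.
  intros Hz Hz0.
  pose proof (parseval b phi Hb Hphi) as HP. pose proof (bk_le1 b HP) as Hb1.
  pose proof (Fser z Hz Hz0) as HF. apply Cser_shift in HF. rewrite e0 in HF.
  pose proof (Cser_scal (-(z / 2)) _ _ (Hb z Hz)) as HB.
  pose proof (Cser_plus _ _ _ _ HF HB) as H. apply Cser_scal with (c := RtoC 2) in H.
  set (Hv := RtoC 2 * (f' z - 1 * z ^ 0 + - (z / 2) * phi z)) in H.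
  assert (HI : Cser (fun j => b j * z ^ (S j) / RtoC (INR (S j))) Hv).
  { eapply Cser_ext; [|exact H]. intros j. cbv beta. rewrite e_S. unfold kap.
    assert (Hm : (0 < INR (S j))%R) by (apply lt_0_INR; lia).
    assert (Hm' : RtoC (INR (S j)) <> 0). { intro E'. apply RtoC_inj in E'. lra. }
    rewrite (S_INR (S j)). set (m := INR (S j)) in *.
    replace (RtoC ((m + 1) / (2 * m))) with ((RtoC m + 1) / (2 * RtoC m)).
    2:{ apply C_eq_ReIm; unfold RtoC, Cdiv, Cinv, Cmult, Cplus; simpl; field; lra. }
    rewrite Cpow_S. field. auto. }
  pose proof (int_bound b phi Hb Hphi Hb1 z Hv Hz HI) as HIb.
  replace (f' z - 1) with ((z * phi z + Hv) / 2).
  2:{ unfold Hv. simpl. field. }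
  unfold Cdiv. rewrite Cmod_mult. 
  replace (Cmod (/ 2)) with (/ 2)%R.
  2:{ rewrite Cmod_inv. rewrite Cmod_R, Rabs_right; lra. intro E'. 
      apply (f_equal Re) in E'. simpl in E'. lra. }
  pose proof (Cmod_triangle (z * phi z) Hv). rewrite Cmod_mult in H0.
  pose proof (Hphi z Hz). pose proof (Cmod_ge_0 z). pose proof (Cmod_ge_0 (phi z)).
  nra.
Qed.

Lemma main_nz n z : (2 <= n)%nat -> (Cmod z < 1)%R -> z <> 0 ->
  let r := Cmod z in
  (Cmod (csum n (fun j => e j * z ^ j) / f' z - 1)%C <=
   r ^ n * ((INR n + 1) / (2 * INR n)) * (1 + 2 * r * sqrt (2 * r - r^2) / (1 - r)^2))%R.
Proof.
  intros Hn Hz Hz0 r.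
  assert (Hr : (0 < r < 1)%R) by (split; [apply Cmod_gt_0; auto | auto]).
  pose proof (parseval b phi Hb Hphi) as HP.
  pose proof (Fser z Hz Hz0) as HF. pose proof (Gbound z Hz Hz0) as HG. fold r in HG.
  set (c := ((INR n + 1) / (2 * INR n))%R).
  assert (HnR : (2 <= INR n)%R) by (replace 2%R with (INR 2) by (simpl; ring); apply le_INR; auto).
  assert (Hc : (0 < c <= 3/4)%R).
  { unfold c. split. apply Rdiv_lt_0_compat; lra. apply Rmult_le_reg_r with (2 * INR n)%R. lra.
    field_simplify; lra. }
  set (rn := (r ^ n)%R).
  assert (Hrn : (0 <= rn <= r^2)%R).
  { unfold rn. split. apply pow_le; lra. replace n with (2 + (n - 2))%nat by lia. rewrite pow_add.
    assert (r ^ (n - 2) <= 1)%R by (apply pow_le1; lra). assert (0 <= r^2)%R by nra. nra. }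
  set (p := sqrt (2 * r - r^2)). set (Q := (2 * r * p / (1 - r)^2)%R).
  assert (Hp0 : (0 <= p)%R) by apply sqrt_pos.
  assert (HQ0 : (0 <= Q)%R) by (unfold Q; apply Rdiv_le_0_compat; nra).
  set (R0 := (rn * c * (1 + Q))%R).
  assert (HR0 : (0 <= R0)%R) by (unfold R0; apply Rmult_le_pos; [apply Rmult_le_pos|]; lra).
  set (s' := csum n (fun j => e j * z ^ j)).
  set (X := fun N => rsum (N - n) (fun i => Cmod (b (n - 1 + i)%nat) * r ^ i)%R).
  set (Y := rsum (n - 1) (fun i => Cmod (b i) * r ^ (S i))%R).
  set (U := rsum (n - 1) (fun i => Cmod (b i) ^ 2)%R).
  set (V := fun N => rsum (N - n) (fun i => Cmod (b (n - 1 + i)%nat) ^ 2)%R).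
  assert (HX0 : forall N, (0 <= X N)%R).
  { intros N. apply rsum_nonneg. intros. apply Rmult_le_pos. apply Cmod_ge_0. apply pow_le; lra. }
  assert (HY0 : (0 <= Y)%R).
  { apply rsum_nonneg. intros. apply Rmult_le_pos. apply Cmod_ge_0. apply pow_le; lra. }
  assert (HU0 : (0 <= U)%R) by (apply rsum_nonneg; intros; apply pow2_ge_0).
  assert (HV0 : forall N, (0 <= V N)%R) by (intros; apply rsum_nonneg; intros; apply pow2_ge_0).
  assert (Tsplit : forall N, (n <= N)%nat -> csum N (fun j => e j * z ^ j) - s' =
      csum (N - n) (fun i => e (n + i)%nat * z ^ (n + i))).
  { intros N HN. replace N with (n + (N - n))%nat at 1 by lia. rewrite csum_split. unfold s'. ring. }
  assert (HT : forall N, (n <= N)%nat -> (Cmod (csum N (fun j => e j * z ^ j) - s')%C <= c * rn * X N)%R).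
  { intros N HN. rewrite Tsplit by auto. eapply Rle_trans. apply Cmod_csum.
    unfold X. rewrite <- rsum_scal. apply rsum_le. intros i _.
    replace (n + i)%nat with (S (n - 1 + i)) by lia. rewrite Cmod_mult, Cmod_e_S, Cmod_pow. fold r.
    replace (S (n - 1 + i)) with (n + i)%nat by lia. rewrite pow_add. fold rn.
    pose proof (kap_le_c n (n - 1 + i) ltac:(lia) ltac:(lia)). fold c in H.
    pose proof (Cmod_ge_0 (b (n - 1 + i)%nat)). pose proof (kap_pos (n - 1 + i)).
    assert (0 <= r ^ i)%R by (apply pow_le; lra).
    assert (0 <= Cmod (b (n - 1 + i)%nat) * (rn * r ^ i))%R by (apply Rmult_le_pos; nra).
    replace (c * rn * (Cmod (b (n - 1 + i)%nat) * r ^ i))%R with (c * (Cmod (b (n - 1 + i)%nat) * (rn * r ^ i)))%R by ring.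
    replace (kap (n - 1 + i) * Cmod (b (n - 1 + i)%nat) * (rn * r ^ i))%R with (kap (n - 1 + i) * (Cmod (b (n - 1 + i)%nat) * (rn * r ^ i)))%R by ring.
    apply Rmult_le_compat_r; auto. }
  assert (Hhead : s' - 1 = csum (n - 1) (fun i => e (S i) * z ^ (S i))).
  { unfold s'. replace n with (S (n - 1)) at 1 by lia. rewrite csum_shift, e0. simpl. ring. }
  assert (HY : (Cmod (s' - 1)%C <= Y)%R).
  { rewrite Hhead. eapply Rle_trans. apply Cmod_csum. apply rsum_le. intros i _.
    rewrite Cmod_mult, Cmod_e_S, Cmod_pow. fold r. pose proof (kap_le1 i). pose proof (kap_pos i).
    pose proof (Cmod_ge_0 (b i)). assert (0 <= r ^ S i)%R by (apply pow_le; lra).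
    assert (0 <= Cmod (b i) * r ^ S i)%R by nra. nra. }
  assert (HG' : forall N, (n <= N)%nat -> (Cmod (csum N (fun j => e j * z ^ j) - 1)%C <= Y + c * rn * X N)%R).
  { intros N HN. replace (csum N (fun j => e j * z ^ j) - 1) with ((s' - 1) + (csum N (fun j => e j * z ^ j) - s')) by ring.
    eapply Rle_trans. apply Cmod_triangle. pose proof (HT N HN). lra. }
  assert (HCSX : forall N, ((X N)^2 * (1 - r^2) <= V N)%R).
  { intros N. assert (H : ((X N)^2 <= V N * rsum (N - n) (fun i => (r ^ i)^2)%R)%R)
      by exact (rsum_CS (N - n) (fun i => Cmod (b (n - 1 + i)%nat)) (fun i => (r ^ i)%R)).
    pose proof (rsum_geom2 (N - n) r ltac:(lra)) as G.
    assert (0 <= 1 - r^2)%R by nra.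
    assert (0 <= rsum (N - n) (fun i => (r ^ i) ^ 2))%R by (apply rsum_nonneg; intros; apply pow2_ge_0).
    pose proof (HV0 N). nra. }
  assert (HCSY : (Y^2 * (1 - r^2) <= U * r^2)%R).
  { assert (EY : Y = (r * rsum (n - 1) (fun i => Cmod (b i) * r ^ i))%R).
    { unfold Y. rewrite <- rsum_scal. apply rsum_ext. intros; simpl; ring. }
    assert (H : ((rsum (n - 1) (fun i => Cmod (b i) * r ^ i)%R)^2 <= U * rsum (n - 1) (fun i => (r ^ i)^2)%R)%R)
      by exact (rsum_CS (n - 1) (fun i => Cmod (b i)) (fun i => (r ^ i)%R)).
    pose proof (rsum_geom2 (n - 1) r ltac:(lra)) as G.
    assert (0 <= 1 - r^2)%R by nra.
    assert (0 <= rsum (n - 1) (fun i => (r ^ i) ^ 2))%R by (apply rsum_nonneg; intros; apply pow2_ge_0).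
    rewrite EY. set (W := rsum (n - 1) (fun i => Cmod (b i) * r ^ i)%R) in *.
    assert (W^2 * (1 - r^2) <= U)%R by nra.
    assert (0 <= r^2)%R by nra. nra. }
  assert (HUV : forall N, (n <= N)%nat -> (U + V N <= 1)%R).
  { intros N HN. unfold U, V. rewrite <- rsum_split. replace (n - 1 + (N - n))%nat with (N - 1)%nat by lia. apply HP. }
  assert (Hf'low : (1 - r <= Cmod (f' z))%R).
  { replace (RtoC 1) with (f' z - (f' z - 1)) by ring. 
    pose proof (Cmod_triangle (f' z) (- (f' z - 1))). rewrite Cmod_opp in H.
    replace (f' z + - (f' z - 1)) with (RtoC 1) in H by ring. rewrite Cmod_1 in H. lra. }
  assert (Hf'nz : f' z <> 0). { intro E. rewrite E, Cmod_0 in Hf'low. lra. }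
  assert (Hkey : (Cmod (f' z - s')%C <= R0 * Cmod (f' z))%R).
  { destruct (Rle_lt_dec r (1/4)) as [Hsm|Hlg].
    -
      assert (HQ : (4 * r^2 <= Q)%R).
      { assert (Hp2 : (p * p = 2 * r - r^2)%R) by (apply sqrt_sqrt; nra).
        assert (Hp : (2 * r <= p)%R) by nra.
        unfold Q. assert (0 < (1 - r)^2 <= 1)%R by (split; nra).
        apply Rle_trans with (2 * r * p)%R. nra.
        apply Rmult_le_reg_r with ((1 - r)^2)%R. lra.
        replace (2 * r * p / (1 - r) ^ 2 * (1 - r) ^ 2)%R with (2 * r * p)%R by (field; lra).
        assert (0 <= 2 * r * p)%R by nra. nra. }
      assert (Hb2 := Cser_bound2 _ _ s' 1 R0 R0 HF HR0).
      assert (H : (Cmod (f' z - s')%C + R0 * Cmod (f' z - 1)%C <= R0)%R).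
      { apply Hb2. exists n. intros N HN.
        pose proof (small_case r Q (X N) Y U (V N) c rn ltac:(lra) HQ (HX0 N) HY0 HU0 (HV0 N) (HCSX N) HCSY (HUV N HN) Hc Hrn) as K.
        fold R0 in K. pose proof (HT N HN). pose proof (HG' N HN).
        assert (R0 * Cmod (csum N (fun j => e j * z ^ j) - 1)%C <= R0 * (Y + c * rn * X N))%R by (apply Rmult_le_compat_l; auto).
        lra. }
      assert (1 - Cmod (f' z - 1)%C <= Cmod (f' z))%R.
      { pose proof (Cmod_triangle (f' z) (- (f' z - 1))). rewrite Cmod_opp in H0.
        replace (f' z + - (f' z - 1)) with (RtoC 1) in H0 by ring. rewrite Cmod_1 in H0. lra. }
      nra.
    -
      set (S := sqrt (1 - r^2)).
      assert (HS : (S * S = 1 - r^2)%R) by (apply sqrt_sqrt; nra).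
      assert (HS0 : (0 < S)%R) by (apply sqrt_lt_R0; nra).
      assert (HT' : (Cmod (f' z - s')%C <= c * rn / S)%R).
      { apply Cser_bound with (u := fun j => e j * z ^ j). auto. exists n. intros N HN.
        eapply Rle_trans. apply HT; auto.
        assert (X N * S <= 1)%R.
        { pose proof (HCSX N). pose proof (HUV N HN). assert (0 <= X N * S)%R by (pose proof (HX0 N); nra). nra. }
        assert (0 <= c * rn)%R by nra.
        apply Rmult_le_reg_r with S; auto. replace (c * rn / S * S)%R with (c * rn)%R by (field; lra). nra. }
      pose proof (large_case r ltac:(lra)) as L. fold p in L. fold Q in L. fold S in L.
      assert (c * rn / S <= c * rn * ((1 + Q) * (1 - r)))%R.
      { apply Rmult_le_reg_r with S; auto. replace (c * rn / S * S)%R with (c * rn)%R by (field; lra).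
        assert (0 <= c * rn)%R by nra. nra. }
      assert (c * rn * ((1 + Q) * (1 - r)) <= R0 * Cmod (f' z))%R.
      { unfold R0. replace (rn * c * (1 + Q) * Cmod (f' z))%R with (c * rn * (1 + Q) * Cmod (f' z))%R by ring.
        assert (0 <= c * rn)%R by nra.
        assert ((1 + Q) * (1 - r) <= (1 + Q) * Cmod (f' z))%R by (apply Rmult_le_compat_l; lra).
        replace (c * rn * (1 + Q) * Cmod (f' z))%R with (c * rn * ((1 + Q) * Cmod (f' z)))%R by ring.
        apply Rmult_le_compat_l; auto. }
      lra. }
  replace (s' / f' z - 1) with ((s' - f' z) / f' z) by (field; auto).
  rewrite Cmod_div by auto. replace (s' - f' z) with (- (f' z - s')) by ring. rewrite Cmod_opp.
  apply Rmult_le_reg_r with (Cmod (f' z)). lra.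
  replace (Cmod (f' z - s') / Cmod (f' z) * Cmod (f' z))%R with (Cmod (f' z - s')) by (field; lra).
  exact Hkey.
Qed.
End Main.

Open Scope C_scope.

Lemma csum_zero n : csum n (fun _ => RtoC 0) = 0.
Proof. induction n; simpl. auto. rewrite IHn. ring. Qed.

Theorem theorem3p1 (a : nat -> C) (f f' phi : C -> C) :
  a 0%nat = 0 -> a 1%nat = 1 ->
  (* f(z) = z + sum_{k>=2} a_k z^k, analytic in the unit disc *)
  (forall z : C, (Cmod z < 1)%R -> is_pseries a z (f z)) ->
  (* f' is the complex derivative of f in the disc *)
  (forall z : C, (Cmod z < 1)%R -> is_derive f z (f' z)) ->
  (* phi analytic in the disc, bounded by 1 *)
  (exists b : nat -> C, forall z : C, (Cmod z < 1)%R -> is_pseries b z (phi z)) ->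
  (forall z : C, (Cmod z < 1)%R -> (Cmod (phi z) <= 1)%R) ->
  (forall z : C, (Cmod z < 1)%R -> z * f' z - f z = / 2 * z ^ 2 * phi z) ->
  forall n : nat, (2 <= n)%nat ->
  forall z : C, (Cmod z < 1)%R ->
    (Cmod (partial_sum_deriv a n z / f' z - 1)
     <= Cmod z ^ n * ((INR n + 1) / (2 * INR n)
                      + A_coef n (Cmod z) * (Cmod z / (1 - Cmod z))))%R.
Proof.
  intros Ha0 Ha1 Hf Hd [b Hb] Hphi Hrel n Hn z Hz.
  assert (Hf' : forall z, (Cmod z < 1)%R -> Cser (fun k => a k * z ^ k) (f z)).
  { intros w Hw. apply is_pseries_Cser. auto. }
  assert (Hb' : forall z, (Cmod z < 1)%R -> Cser (fun k => b k * z ^ k) (phi z)).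
  { intros w Hw. apply is_pseries_Cser. auto. }
  assert (Epsd : partial_sum_deriv a n z = csum n (fun j => e a j * z ^ j)).
  { unfold partial_sum_deriv. rewrite sum_n_csum. replace (S (Nat.pred n)) with n by lia.
    apply csum_ext. intros; unfold e; auto. }
  rewrite Epsd.
  destruct (Ceq_dec z 0) as [Hz0|Hz0].
  - subst z. rewrite (f'0 a f f' Hf' Hd Ha1).
    replace n with (S (n - 1)) at 1 by lia. rewrite csum_shift.
    rewrite (csum_ext (n - 1) _ (fun _ => RtoC 0)).
    2:{ intros k _. simpl. ring. }
    rewrite csum_zero, e0 by auto. simpl.
    replace (1 * 1 + 0) with (RtoC 1) by ring.
    replace (1 / 1 - 1) with (RtoC 0) by field. rewrite Cmod_0.
    replace n with (S (n - 1)) at 1 by lia. rewrite pow_i by lia. lra.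
  - pose proof (main_nz a b f f' phi Ha0 Ha1 Hf' Hd Hb' Hphi Hrel n z Hn Hz Hz0) as H. simpl in H.
    eapply Rle_trans. exact H.
    unfold A_coef. apply rhs_bound. auto. split. apply Cmod_gt_0; auto. auto.
    assert (0 <= euler_gamma)%R by exact euler_gamma_ge0.
    assert (0 <= ln (INR n - 1))%R.
    { rewrite <- ln_1. apply ln_le. lra. assert (2 <= INR n)%R by (replace 2%R with (INR 2) by (simpl; ring); apply le_INR; auto). lra. }
    lra.
Qed.
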